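(* The exact sequence \[0\to\mathbb Z\to\mathbb Z[\tfrac12]\to\mathbb Z(2^\infty)\to0\] (inclusion followed by the quotient map $\mathbb Z[\tfrac12]\to\mathbb Z[\tfrac12]/\mathbb Z=\mathbb Z(2^\infty)$) is coarsely split. Moreover, the metric $d_{\mathbb Z}$ in the definition of coarse splitting can be chosen to be the standard word metric $d_{\mathbb Z}(a,b)=|a-b|$.
   Context: $\mathbb Z[\tfrac12]=\{m/2^k:m\in\mathbb Z,k\ge0\}$; $\mathbb Z(2^\infty)=\varinjlim(\mathbb Z_2\to\mathbb Z_4\to\cdots)\cong\mathbb Z[\tfrac12]/\mathbb Z$. A proper left invariant metric is $d(g,h)=\|g^{-1}h\|$ for a proper norm ($\|g\|=0$ iff $g$ trivial, symmetric, subadditive, finite balls). An exact sequence $0\to K\overset{i}{\to}G\overset{\pi}{\to}Q\to0$ is coarsely split if there are proper left invariant metrics $d_K,d_G,d_Q$ and a coarse equivalence $f:(G,d_G)\to(K\oplus Q,d_K\oplus d_Q)$ ($\ell_1$ sum metric) with $f\circ i$ at bounded distance from $k\mapsto(k,0)$ and $\pi'\circ f$ at bounded distance from $\pi$, $\pi'$ the projection onto $Q$. Coarse maps: for each $\delta$ there is $\epsilon$ with $d(x,y)\le\delta\Rightarrow d(f x,f y)\le\epsilon$; coarse equivalences are coarse maps with coarse inverses up to bounded distance. *)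

(* Defs.v *)
From HB Require Import structures.
From mathcomp Require Import all_boot all_order all_algebra.
From mathcomp Require Import Rstruct.
Set Implicit Arguments. Unset Strict Implicit. Unset Printing Implicit Defensive.
Import Order.TTheory GRing.Theory Num.Theory.
Local Open Scope ring_scope.

(* q is dyadic iff its (reduced) denominator is a power of 2; we test this
   as  denq q | 2^(denq q)  and prove it equivalent to
   "exists k, 2^k * q is an integer" (is_dyadicP). *)
Definition is_dyadic (q : rat) : bool := (`|denq q| %| 2 ^ `|denq q|)%N.

Lemma dyadic_den (q : rat) (k : nat) :
  (2 ^ k)%:R * q \is a Num.int -> (`|denq q| %| 2 ^ k)%N.
Proof.
move=> /floorK; set z := Num.floor _ => hz.
have e : (2 ^ k)%:Z * numq q = z * denq q.
  apply: (@intr_inj rat); rewrite !rmorphM /= hz numqE.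
  by rewrite pmulrn mulrA.
have : (`|denq q| %| `|(z * denq q)%R|)%N by rewrite abszM; apply: dvdn_mull.
rewrite -e abszM Gauss_dvdl //.
by rewrite coprime_sym coprime_num_den.
Qed.

Lemma is_dyadicP (q : rat) :
  reflect (exists k : nat, (2 ^ k)%:R * q \is a Num.int) (is_dyadic q).
Proof.
apply: (iffP idP) => [h|[k /dyadic_den]].
  exists `|denq q|%N.
  case/dvdnP: h => c hc.
  rewrite hc natrM -mulrA.
  have -> : (`|denq q|)%:R * q = (numq q)%:~R.
    by rewrite numqE mulrC pmulrn -[X in _ = _ * X%:~R]absz_denq.
  by rewrite rpredM // ?intr_int // natr_int.
case/(dvdn_pfactor _ _ (isT : prime 2)) => m _ hm.
rewrite /is_dyadic hm dvdn_Pexp2l //.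
by apply: ltnW; apply: ltn_expl.
Qed.

Lemma is_dyadic_zmod_closed : GRing.zmod_closed is_dyadic.
Proof.
split; first by apply/is_dyadicP; exists 0%N; rewrite mulr0 rpred0.
move=> x y /is_dyadicP[a ha] /is_dyadicP[b hb]; apply/is_dyadicP.
exists (a + b)%N; rewrite mulrBr; apply: rpredB.
  by rewrite expnD natrM mulrAC rpredM // natr_int.
by rewrite addnC expnD natrM mulrAC rpredM // natr_int.
Qed.

HB.instance Definition _ := GRing.isZmodClosed.Build rat is_dyadic
  is_dyadic_zmod_closed.

Record dyadic := Dyadic { dyval : rat; _ : is_dyadic dyval }.
HB.instance Definition _ := [isSub for dyval].
HB.instance Definition _ := [Choice of dyadic by <:].
HB.instance Definition _ := [SubChoice_isSubZmodule of dyadic by <:].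

Lemma int_dyadic (z : int) : z%:~R \in is_dyadic.
Proof. by apply/is_dyadicP; exists 0%N; rewrite mul1r intr_int. Qed.

Definition dyadic_of_int (z : int) : dyadic := Dyadic (int_dyadic z).

Lemma frac_dyadic (x : dyadic) : (dyval x - (Num.floor (dyval x))%:~R) \in is_dyadic.
Proof. by rewrite rpredB ?int_dyadic //; case: x. Qed.

Definition dfrac (x : dyadic) : dyadic := Dyadic (frac_dyadic x).

Lemma floor_dfrac x : Num.floor (dyval (dfrac x)) == 0.
Proof.
rewrite /= floorDrz ?rpredN ?intr_int // floorN ?intr_int // intrKfloor.
by rewrite subrr.
Qed.

(* Z(2^oo) = Z[1/2]/Z, represented by the dyadic rationals in [0,1) *)
Record prufer2 := Prufer { prval : dyadic; _ : Num.floor (dyval prval) == 0 }.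
HB.instance Definition _ := [isSub for prval].
HB.instance Definition _ := [Choice of prufer2 by <:].

Definition prufer_proj (x : dyadic) : prufer2 := Prufer (floor_dfrac x).

Lemma proj_shift (x y : dyadic) : (exists z : int, dyval x - dyval y = z%:~R) ->
  prufer_proj x = prufer_proj y.
Proof.
case=> z hz; apply: val_inj; apply: val_inj => /=.
have -> : dyval x = dyval y + z%:~R by rewrite -hz addrC subrK.
rewrite floorDrz ?intr_int // intrKfloor rmorphD /= opprD addrACA subrr addr0.
by [].
Qed.

Lemma proj_val (x : dyadic) : exists z : int, dyval (prval (prufer_proj x)) - dyval x = z%:~R.
Proof. by exists (- Num.floor (dyval x)); rewrite /= addrAC subrr add0r rmorphN. Qed.

Lemma proj_id (a : prufer2) : prufer_proj (prval a) = a.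
Proof.
case: a => x hx; apply: val_inj; apply: val_inj => /=.
by rewrite (eqP hx) subr0.
Qed.

Definition pr_add (a b : prufer2) := prufer_proj (prval a + prval b).
Definition pr_opp (a : prufer2) := prufer_proj (- prval a).
Definition pr_zero := prufer_proj 0.

Lemma projDl x y : prufer_proj (prval (prufer_proj x) + y) = prufer_proj (x + y).
Proof.
apply: proj_shift; case: (proj_val x) => z hz; exists z.
by rewrite /= -hz; rewrite opprD addrACA subrr addr0.
Qed.

Lemma projDr x y : prufer_proj (x + prval (prufer_proj y)) = prufer_proj (x + y).
Proof. by rewrite addrC projDl addrC. Qed.

Lemma pr_addA : associative pr_add.
Proof. by move=> a b c; rewrite /pr_add projDl projDr addrA. Qed.
Lemma pr_addC : commutative pr_add.
Proof. by move=> a b; rewrite /pr_add addrC. Qed.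
Lemma pr_add0 : left_id pr_zero pr_add.
Proof. by move=> a; rewrite /pr_add /pr_zero projDl add0r proj_id. Qed.
Lemma pr_addN : left_inverse pr_zero pr_opp pr_add.
Proof. by move=> a; rewrite /pr_add /pr_opp projDl addNr. Qed.

HB.instance Definition _ := GRing.isZmodule.Build prufer2
  pr_addA pr_addC pr_add0 pr_addN.

Local Notation RR := Rdefinitions.R.

Definition proper_norm (G : zmodType) (N : G -> RR) : Prop :=
  [/\ (forall g : G, N g = 0 <-> g = 0),
      (forall g : G, N (- g) = N g),
      (forall g h : G, N (g + h) <= N g + N h) &
      (forall r : RR, exists s : seq G, forall g : G, N g <= r -> g \in s)].

Definition norm_dist (G : zmodType) (N : G -> RR) (g h : G) : RR := N (- g + h).

Definition sum_dist (X Y : Type) (dX : X -> X -> RR) (dY : Y -> Y -> RR)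
  (a b : X * Y) : RR := dX a.1 b.1 + dY a.2 b.2.

Definition coarse_map (X Y : Type) (dX : X -> X -> RR) (dY : Y -> Y -> RR)
  (f : X -> Y) : Prop :=
  forall delta : RR, exists eps : RR, forall x y : X,
    dX x y <= delta -> dY (f x) (f y) <= eps.

Definition bounded_dist (X Y : Type) (dY : Y -> Y -> RR) (f g : X -> Y) : Prop :=
  exists C : RR, forall x : X, dY (f x) (g x) <= C.

Definition coarse_equivalence (X Y : Type) (dX : X -> X -> RR)
  (dY : Y -> Y -> RR) (f : X -> Y) : Prop :=
  coarse_map dX dY f /\
  exists g : Y -> X, [/\ coarse_map dY dX g,
                         bounded_dist dX (fun x => g (f x)) id &
                         bounded_dist dY (fun y => f (g y)) id].

Definition coarsely_split_with (K G Q : zmodType) (i : K -> G) (pi : G -> Q)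
  (NK : K -> RR) : Prop :=
  exists (NG : G -> RR) (NQ : Q -> RR),
    [/\ proper_norm NG, proper_norm NQ &
    exists f : G -> K * Q,
      [/\ coarse_equivalence (norm_dist NG)
            (sum_dist (norm_dist NK) (norm_dist NQ)) f,
          bounded_dist (sum_dist (norm_dist NK) (norm_dist NQ))
            (fun k => f (i k)) (fun k => (k, 0)) &
          bounded_dist (norm_dist NQ) (fun g => (f g).2) pi]].

Definition coarsely_split (K G Q : zmodType) (i : K -> G) (pi : G -> Q) : Prop :=
  exists NK : K -> RR, proper_norm NK /\ coarsely_split_with i pi NK.

(* Main.v *)
Require Import Defs.
From HB Require Import structures.
From mathcomp Require Import all_boot all_order all_algebra.
From mathcomp Require Import Rstruct.
From mathcomp Require Import zify ring lra.
Set Implicit Arguments. Unset Strict Implicit. Unset Printing Implicit Defensive.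
Import Order.TTheory GRing.Theory Num.Theory.
Local Open Scope ring_scope.

Definition vv (q : rat) : nat := logn 2 `|denq q|.

Lemma den_dy (q : rat) : is_dyadic q -> `|denq q|%N = (2 ^ vv q)%N.
Proof.
rewrite /is_dyadic => h.
case/(dvdn_pfactor _ _ (isT : prime 2)): h => m _ hm.
by rewrite /vv hm pfactorK.
Qed.

Lemma vv_le (q : rat) (k : nat) : (2 ^ k)%:R * q \is a Num.int -> (vv q <= k)%N.
Proof.
move/dyadic_den => h; rewrite /vv.
have := dvdn_leq_log 2 (expn_gt0 2 k) h.
by rewrite pfactorK.
Qed.

Lemma vv_int (q : rat) : is_dyadic q -> (2 ^ vv q)%:R * q \is a Num.int.
Proof.
move=> /den_dy h.
have -> : (2 ^ vv q)%:R = (denq q)%:~R :> rat.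
  by rewrite -h -absz_denq.
by rewrite mulrC -numqE intr_int.
Qed.

Lemma vv_intk (q : rat) k : is_dyadic q -> (vv q <= k)%N -> (2 ^ k)%:R * q \is a Num.int.
Proof.
move=> /vv_int h hk.
by rewrite -(subnK hk) expnD natrM -mulrA rpredM // natr_int.
Qed.

Lemma vvD (x y : rat) : is_dyadic x -> is_dyadic y -> (vv (x + y) <= vv x + vv y)%N.
Proof.
move=> hx hy; apply: vv_le; rewrite mulrDr rpredD //.
  by apply: vv_intk; rewrite ?leq_addr.
by apply: vv_intk; rewrite ?leq_addl.
Qed.

Lemma vvN (x : rat) : vv (- x) = vv x.
Proof. by rewrite /vv denqN. Qed.

Lemma vv_z (z : int) : vv z%:~R = 0%N.
Proof. by apply/eqP; rewrite -leqn0; apply: vv_le; rewrite mul1r intr_int. Qed.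

Lemma vv0_int (x : rat) : is_dyadic x -> vv x = 0%N -> x \is a Num.int.
Proof. by move=> /vv_int h h0; move: h; rewrite h0 mul1r. Qed.

Lemma vvDz (x : rat) (z : int) : is_dyadic x -> vv (x + z%:~R) = vv x.
Proof.
move=> hx; apply/eqP; rewrite eqn_leq; apply/andP; split.
  by have := vvD hx (int_dyadic z); rewrite vv_z addn0.
have := vvD (rpredD hx (int_dyadic z)) (int_dyadic (- z)).
by rewrite vv_z addn0 mulrNz addrK.
Qed.

Lemma dyD (x y : dyadic) : dyval (x + y) = dyval x + dyval y.
Proof. by []. Qed.
Lemma dyN (x : dyadic) : dyval (- x) = - dyval x.
Proof. by []. Qed.
Lemma dy0 : dyval 0 = 0.
Proof. by []. Qed.

Lemma projD x y : prufer_proj (x + y) = prufer_proj x + prufer_proj y.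
Proof. by rewrite [RHS]/(_ + _) /= /pr_add projDl projDr. Qed.

Lemma projN x : prufer_proj (- x) = - prufer_proj x.
Proof.
rewrite [RHS]/(- _) /= /pr_opp; apply: proj_shift.
case: (proj_val x) => z hz; exists z.
by rewrite dyN /= -hz opprK addrC.
Qed.

Lemma proj0 : prufer_proj 0 = 0.
Proof. by []. Qed.

Lemma projK (a : prufer2) : prufer_proj (prval a) = a.
Proof. exact: proj_id. Qed.

Local Notation RR := Rdefinitions.R.

Definition NK (k : int) : RR := `|k|%:~R.
Definition NG (x : dyadic) : RR := ratr `|dyval x| + (vv (dyval x))%:R.
Definition NQ (a : prufer2) : RR := (vv (dyval (prval a)))%:R.

Lemma NQ_proj x : NQ (prufer_proj x) = (vv (dyval x))%:R.
Proof.
rewrite /NQ; case: (proj_val x) => z hz.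
have -> : dyval (prval (prufer_proj x)) = dyval x + z%:~R by rewrite -hz addrC subrK.
by rewrite vvDz // (valP x).
Qed.

Definition IL (M : nat) : seq int := [seq (i%:Z - M%:Z) | i <- iota 0 (2 * M).+1].

Lemma IL_mem (m : int) (M : nat) : (`|m| <= M%:Z) -> m \in IL M.
Proof.
move=> hm; apply/mapP; exists (absz (m + M%:Z)).
  rewrite mem_iota add0n.
  have h1 : 0 <= m + M%:Z by move: hm; rewrite ler_norml; case/andP=> h _; lia.
  have : ((absz (m + M%:Z)) : int) = m + M%:Z by rewrite gez0_abs.
  move: hm; rewrite ler_norml => /andP[ha hb] e.
  have : ((absz (m + M%:Z)) : int) < (2 * M).+1 by rewrite e; lia.
  rewrite ltz_nat; lia.
rewrite gez0_abs ?addrK //.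
by move: hm; rewrite ler_norml => /andP[h _]; lia.
Qed.

Lemma bound_r (r : RR) : r < (Num.bound `|r|)%:R.
Proof. exact: le_lt_trans (ler_norm r) (archi_boundP (normr_ge0 r)). Qed.

Lemma NK_proper : proper_norm NK.
Proof.
split.
- move=> g; rewrite /NK; split=> [h|->]; last by rewrite normr0.
  by apply/eqP; rewrite -normr_eq0 -(intr_eq0 RR); apply/eqP.
- by move=> g; rewrite /NK normrN.
- by move=> g h; rewrite /NK -intrD ler_int ler_normD.
- move=> r; exists (IL (Num.bound `|r|)) => k hk; apply: IL_mem.
  have := le_lt_trans hk (bound_r r).
  change ((Num.bound `|r|)%:R) with (((Num.bound `|r|)%:Z)%:~R : RR).
  by rewrite /NK ltr_int => /ltW.
Qed.

Definition LQ (K M : nat) : seq rat := [seq (m%:~R / (2 ^ K)%:R : rat) | m <- IL M].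

Lemma LQ_mem (K M : nat) (q : rat) : (2 ^ K)%:R * q \is a Num.int ->
  `|(2 ^ K)%:R * q| <= M%:R -> q \in LQ K M.
Proof.
move=> /floorK hq hM; apply/mapP; exists (Num.floor ((2 ^ K)%:R * q)).
  apply: IL_mem; rewrite -(ler_int rat) intr_norm hq.
  exact: hM.
have h2 : (2 ^ K)%:R != 0 :> rat by rewrite pnatr_eq0 expn_eq0.
by rewrite hq mulrC mulrA mulVf // mul1r.
Qed.

Definition LG (K M : nat) : seq dyadic := pmap insub (LQ K M).

Lemma NG_ge (x : dyadic) : ratr `|dyval x| <= NG x /\ (vv (dyval x))%:R <= NG x.
Proof.
rewrite /NG; split; first by rewrite lerDl ler0n.
by rewrite lerDr ratr_norm normr_ge0.
Qed.

Lemma NG_proper : proper_norm NG.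
Proof.
split.
- move=> g; split=> [h|->]; last by rewrite /NG dy0 normr0 rmorph0 add0r (vv_z 0).
  have [h1 _] := NG_ge g; rewrite h in h1.
  apply: val_inj => /=; rewrite [RHS]dy0.
  by apply/eqP; rewrite -normr_le0 -(ler_rat RR) rmorph0.
- by move=> g; rewrite /NG dyN normrN vvN.
- move=> g h; rewrite /NG dyD.
  have e1 : ratr `|dyval g + dyval h| <= ratr `|dyval g| + ratr `|dyval h| :> RR.
    by rewrite -rmorphD ler_rat ler_normD.
  have e2 : (vv (dyval g + dyval h))%:R <= (vv (dyval g))%:R + (vv (dyval h))%:R :> RR.
    by rewrite -natrD ler_nat vvD // (valP g, valP h).
  lra.
- move=> r; set K := Num.bound `|r|; exists (LG K (2 ^ K * K)) => x hx.
  rewrite /LG mem_pmap_sub.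
  have [h1 h2] := NG_ge x.
  have hK := bound_r r; rewrite -/K in hK.
  have hv : (vv (dyval x) <= K)%N.
    by apply: ltnW; rewrite -(ltr_nat RR); apply: le_lt_trans hK; apply: le_trans hx.
  have ha : `|dyval x| <= K%:R.
    rewrite -(ler_rat RR) ratr_nat; apply: ltW; apply: le_lt_trans hK.
    exact: le_trans hx.
  apply: LQ_mem; first by apply: vv_intk => //; apply: valP.
  rewrite normrM natrM normr_nat mulrC.
  by rewrite [X in _ <= X]mulrC ler_wpM2r // ler0n.
Qed.

Lemma prval_bounds (a : prufer2) : 0 <= dyval (prval a) < 1.
Proof.
case: a => x hx /=; move: hx; rewrite floor_eq add0r => /andP[h1 h2].
by rewrite h1 h2.
Qed.

Lemma NQ_proper : proper_norm NQ.
Proof.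
split.
- move=> a; split=> [h|->]; last by rewrite -proj0 NQ_proj dy0 (vv_z 0).
  have h0 : vv (dyval (prval a)) = 0%N by apply/eqP; rewrite -(pnatr_eq0 RR); apply/eqP.
  have hi := vv0_int (valP (prval a)) h0.
  have e : prval a = 0.
    apply: val_inj; rewrite /= -(floorK hi); case: a {h h0 hi} => x hx /=.
    by rewrite (eqP hx).
  by rewrite -(projK a) e proj0.
- by move=> a; rewrite -[a]projK -projN !NQ_proj dyN vvN.
- move=> a b; rewrite -[a]projK -[b]projK -projD !NQ_proj dyD.
  by rewrite -natrD ler_nat vvD // (valP (prval a), valP (prval b)).
- move=> r; set K := Num.bound `|r|; exists (map prufer_proj (LG K (2 ^ K))) => a ha.
  rewrite -(projK a); apply: map_f.
  rewrite /LG mem_pmap_sub.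
  have hK := bound_r r; rewrite -/K in hK.
  have hv : (vv (dyval (prval a)) <= K)%N.
    by apply: ltnW; rewrite -(ltr_nat RR); apply: le_lt_trans hK.
  apply: LQ_mem; first by apply: vv_intk => //; apply: valP.
  have /andP[b1 b2] := prval_bounds a.
  rewrite normrM normr_nat ger0_norm //.
  by rewrite ler_piMr ?ler0n // ltW.
Qed.

Definition ff (x : dyadic) : int * prufer2 := (Num.floor (dyval x), prufer_proj x).
Definition gg (p : int * prufer2) : dyadic := dyadic_of_int p.1 + prval p.2.

Lemma proj_int z : prufer_proj (dyadic_of_int z) = 0.
Proof. by rewrite -proj0; apply: proj_shift; exists z; rewrite dy0 subr0. Qed.

Lemma gf x : gg (ff x) = x.
Proof. by apply: val_inj; rewrite /= addrC subrK. Qed.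

Lemma fg p : ff (gg p) = p.
Proof.
case: p => k a; rewrite /ff /gg /=; congr (_, _).
  rewrite addrC floorDrz ?intr_int // intrKfloor.
  by case: a => x hx /=; rewrite (eqP hx) add0r.
by rewrite projD proj_int add0r projK.
Qed.

Lemma fi k : ff (dyadic_of_int k) = (k, 0).
Proof. by rewrite /ff proj_int /= intrKfloor. Qed.

Lemma floor_diff (x y : rat) : (`|- Num.floor x + Num.floor y|)%:~R <= `|- x + y| + 1.
Proof.
rewrite intr_norm intrD intrN.
have := floor_le x; have := floorD1_gt x; have := floor_le y; have := floorD1_gt y.
rewrite !intrD.
have := ler_norm (- x + y); have hN : - (- x + y) <= `|- x + y| by rewrite -normrN ler_norm.
set a := (Num.floor x)%:~R; set b := (Num.floor y)%:~R => n1 h1 h2 h3 h4.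
rewrite ler_norml; apply/andP; split; lra.
Qed.

Lemma NK_rat (k : int) : NK k = ratr (`|k|%:~R).
Proof. by rewrite /NK ratr_int. Qed.

Lemma ff_coarse : coarse_map (norm_dist NG) (sum_dist (norm_dist NK) (norm_dist NQ)) ff.
Proof.
move=> d; exists (d + 1) => x y; rewrite /norm_dist /sum_dist /ff /=.
rewrite -projN -projD NQ_proj /NG dyD dyN NK_rat.
have := floor_diff (dyval x) (dyval y); rewrite -(ler_rat RR) rmorphD rmorph1.
move=> h1 h2; lra.
Qed.

Lemma gg_coarse : coarse_map (sum_dist (norm_dist NK) (norm_dist NQ)) (norm_dist NG) gg.
Proof.
move=> d; exists (d + 1) => [[k a] [l b]]; rewrite /norm_dist /sum_dist /gg /=.
rewrite -[a]projK -[b]projK -projN -projD NQ_proj !projK /NG dyD dyN !dyD /=.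
set pa := dyval (prval a); set pb := dyval (prval b).
have e : - (k%:~R + pa) + (l%:~R + pb) = (- pa + pb) + (- k + l)%:~R.
  by rewrite intrD intrN; ring.
have hd : (- pa + pb) \in is_dyadic.
  by rewrite rpredD ?rpredN //; [exact: (valP (prval a)) | exact: (valP (prval b))].
rewrite e vvDz //.
have /andP[a1 a2] := prval_bounds a; have /andP[b1 b2] := prval_bounds b.
rewrite -/pa in a1 a2; rewrite -/pb in b1 b2.
have hn : `|(- pa + pb) + (- k + l)%:~R| <= `|(- k + l)|%:~R + 1.
  apply: le_trans (ler_normD _ _) _; rewrite intr_norm.
  have : `|- pa + pb| <= 1 by rewrite ler_norml; apply/andP; split; lra.
  move=> h; lra.
move: hn; rewrite -(ler_rat RR) [ratr (_ + 1)]rmorphD rmorph1 /= ratr_int => hn h; rewrite /NK in h; lra.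
Qed.

Lemma N0 (G : zmodType) (N : G -> RR) : proper_norm N -> N 0 = 0.
Proof. by case=> h _ _ _; apply/h. Qed.

Lemma main_with : coarsely_split_with dyadic_of_int prufer_proj NK.
Proof.
have nk := N0 NK_proper; have ng := N0 NG_proper; have nq := N0 NQ_proper.
exists NG, NQ; split; [exact: NG_proper | exact: NQ_proper |].
exists ff; split.
- split; first exact: ff_coarse.
  exists gg; split; first exact: gg_coarse.
  + by exists 0 => x; rewrite gf /norm_dist addNr ng.
  + by exists 0 => p; rewrite fg /sum_dist /norm_dist !addNr nk nq addr0.
- by exists 0 => k; rewrite fi /sum_dist /norm_dist !addNr nk nq addr0.
- by exists 0 => x; rewrite /norm_dist /= addNr nq.
Qed.

Theorem mainTheorem16 :
  coarsely_split dyadic_of_int prufer_proj /\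
  coarsely_split_with dyadic_of_int prufer_proj
    (fun k : int => (`|k|%:~R : Rdefinitions.R)).
Proof.
split; last exact: main_with.
by exists NK; split; [exact: NK_proper | exact: main_with].
Qed.
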